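(* Suppose $\mathsf{N}=(\mathsf{M}-1)\mathsf{T}+1$ and consider the coding scheme described in the context. For each $k=0,1,\dots,\mathsf{M}-1$ there exists a function $f_k:\mathbb{R}^{\mathsf{N}}\to\mathbb{R}$ (which may depend on $n$) such that $$\lim_{n\to\infty} f_k\big(\tilde V^{(1)},\dots,\tilde V^{(\mathsf{N})}\big)=D_k$$ for every realization of the random variables, where $\tilde V^{(j)}$ depends on $n$ through $\zeta_1(n),\zeta_2(n)$.
   Context: Let $\mathsf{M},\mathsf{T}$ be positive integers, $\eta>0$, $\sigma^2>0$. Real inputs $A_1,\dots,A_{\mathsf{M}}$. For each $i\in[\mathsf{M}]$ let $R_i$ (with variance $\sigma^2$) and $S_{i,1},\dots,S_{i,\mathsf{T}-1}$ be zero-mean random variables, all of them mutually independent and independent of the inputs. Let $\zeta_1(n),\zeta_2(n)$ be strictly positive sequences with $\lim_{n\to\infty}\zeta_1(n)/\zeta_2(n)=\lim_{n\to\infty}\zeta_2(n)=0$ and, when $\mathsf{T}\ge2$, $\lim_{n\to\infty}\zeta_2(n)^{\mathsf{T}/(\mathsf{T}-1)}/\zeta_1(n)=0$. Encoding polynomials: if $\mathsf{T}\ge2$, $p_i(x)=(A_i+R_i)+\zeta_2(n)\sum_{t=1}^{\mathsf{T}-1}S_{i,t}x^t+\zeta_1(n)R_ix^{\mathsf{T}}$; if $\mathsf{T}=1$, $p_i(x)=(A_i+R_i)+\zeta_1(n)R_ix$. Fix distinct reals $x_1,\dots,x_{\mathsf{N}}$; node $j$ outputs $\tilde V^{(j)}=\prod_{i=1}^{\mathsf{M}}p_i(x_j)$.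 Let $\alpha=\eta/(\sigma^2+\eta)$ and $Z_i=\alpha(A_i+R_i)-A_i$ (equivalently $Z_i=-\frac{\sigma^2}{\sigma^2+\eta}A_i+\frac{\eta}{\sigma^2+\eta}R_i$). For $k=0,\dots,\mathsf{M}-1$, $D_k=\sum_{\mathcal{S}\subseteq[\mathsf{M}],|\mathcal{S}|=k}\big(\prod_{i\in\mathcal{S}}A_i\big)\big(\prod_{l\notin\mathcal{S}}(A_l+Z_l)\big)$. *)

(* Defs.v *)
From HB Require Import structures.
From mathcomp Require Import all_boot all_order all_algebra.
From mathcomp Require Import all_classical all_reals all_analysis.
Unset Strict Implicit. Unset Printing Implicit Defensive.
Import Order.TTheory GRing.Theory Num.Theory.
Local Open Scope ring_scope.

Section Coding.
Variable R : realType.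

(* Encoding polynomial p_i evaluated at x, for parameters z1 = zeta_1(n),
   z2 = zeta_2(n); a = A_i, r = R_i, s t = S_{i,t+1} (t : 'I_(T-1)). *)
Definition enc_poly (T : nat) (z1 z2 a r : R) (s : 'I_T.-1 -> R) (x : R) : R :=
  if (2 <= T)%N then
    (a + r) + z2 * (\sum_(t < T.-1) s t * x ^+ t.+1) + z1 * r * x ^+ T
  else (a + r) + z1 * r * x.

Definition node_output (M T : nat) (z1 z2 : R) (A Rv : 'I_M -> R)
  (S : 'I_M -> 'I_T.-1 -> R) (xj : R) : R :=
  \prod_(i < M) @enc_poly T z1 z2 (A i) (Rv i) (S i) xj.

Definition alpha_c (eta sigma2 : R) : R := eta / (sigma2 + eta).

Definition Zc (eta sigma2 a r : R) : R := alpha_c eta sigma2 * (a + r) - a.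

Definition Dk (M : nat) (eta sigma2 : R) (A Rv : 'I_M -> R) (k : nat) : R :=
  \sum_(Sset : {set 'I_M} | #|Sset| == k)
     (\prod_(i in Sset) A i) *
     (\prod_(l in ~: Sset) (A l + Zc eta sigma2 (A l) (Rv l))).

End Coding.

(* Main.v *)
Require Import Defs.
From HB Require Import structures.
From mathcomp Require Import all_boot all_order all_algebra.
From mathcomp Require Import all_classical all_reals all_analysis.
From mathcomp Require Import ring zify.
Import Order.TTheory GRing.Theory Num.Theory.
Import numFieldNormedType.Exports.
Local Open Scope classical_set_scope.
Local Open Scope ring_scope.

Section Hom.
Variable R : comRingType.

Lemma hom_expand (M : nat) (a b : 'I_M -> R) (u v : R) :
  \prod_(i < M) (a i * u + b i * v) =
  \sum_(j < M.+1) (\sum_(S : {set 'I_M} | #|S| == j)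
        (\prod_(i in S) b i) * (\prod_(i in ~: S) a i)) * (u ^+ (M - j) * v ^+ j).
Proof.
under eq_bigr do rewrite addrC.
rewrite bigA_distr.
rewrite (partition_big (fun S : {set 'I_M} => (inord #|S| : 'I_M.+1)) xpredT) //.
apply: eq_bigr => j _.
rewrite big_distrl /=.
apply: eq_big => [S|S /eqP HS].
  have hS : (#|S| <= M)%N by rewrite -[X in (_ <= X)%N]card_ord max_card.
  apply/eqP/eqP => H.
  by rewrite -H inordK.
  by apply/val_inj; rewrite /= inordK.
have hS : (#|S| <= M)%N by rewrite -[X in (_ <= X)%N]card_ord max_card.
have ej : (j : nat) = #|S| by rewrite -HS /= inordK.
rewrite (bigID (fun i => i \in S)) /=.
rewrite (eq_bigr (fun i => b i * v)); last by move=> i ->.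
rewrite [X in _ * X](eq_bigr (fun i => a i * u)); last by move=> i /negbTE ->.
rewrite !big_split /= !prodr_const.
have -> : #|(fun i : 'I_M => i \notin S)| = (M - j)%N.
  have e1 : #|(fun i : 'I_M => i \notin S)| = #|~: S|.
    by apply: eq_card => i; rewrite finset.in_setC.
  rewrite e1; have := cardsC S; rewrite card_ord => HM.
  by apply/eqP; rewrite -(eqn_add2l #|S|) HM ej subnKC.
rewrite (eq_bigl (fun i => i \in ~: S) a); last by move=> i; rewrite finset.in_setC.
rewrite ej.
ring.
Qed.
End Hom.

Definition Ecoef {R : comRingType} {M : nat} (a b : 'I_M -> R) (j : nat) : R :=
  \sum_(S : {set 'I_M} | #|S| == j) (\prod_(i in S) b i) * (\prod_(i in ~: S) a i).

Lemma homP (R : comRingType) (M : nat) (a b : 'I_M -> R) (u v : {poly R}) :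
  \prod_(i < M) ((a i)%:P * u + (b i)%:P * v) =
  \sum_(j < M.+1) (Ecoef a b j)%:P * (u ^+ (M - j) * v ^+ j).
Proof.
rewrite hom_expand; apply: eq_bigr => j _; congr (_ * _).
rewrite /Ecoef rmorph_sum; apply: eq_bigr => S _.
by rewrite rmorphM /= !rmorph_prod.
Qed.

Lemma coef_sumCX (R : comRingType) (M T : nat) (c : nat -> R) (k : nat) :
  (0 < T)%N -> (k < M.+1)%N ->
  (\sum_(j < M.+1) (c j)%:P * (1 ^+ (M - j) * ('X^T) ^+ j))`_(k * T) = c k.
Proof.
move=> T0 kM; rewrite coef_sum.
under eq_bigr do rewrite expr1n mul1r -exprM coefCM coefXn.
rewrite (bigD1 (Ordinal kM)) //= mulnC eqxx mulr1 big1 ?addr0 // => j hj.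
case: eqP => [e|]; last by rewrite mulr0.
exfalso; move/eqP: hj; apply; apply/val_inj => /=.
by move/eqP: e; rewrite eqn_pmul2l // => /eqP.
Qed.

Lemma coef_sumCu (R : comRingType) (M : nat) (c : nat -> R) (u v : {poly R}) (k : nat) :
  (\sum_(j < M.+1) (c j)%:P * (u ^+ (M - j) * v ^+ j))`_k =
  \sum_(j < M.+1) c j * (u ^+ (M - j) * v ^+ j)`_k.
Proof. by rewrite coef_sum; apply: eq_bigr => j _; rewrite coefCM. Qed.

Section Lagrange.
Variable F : fieldType.
Variable N : nat.
Variable x : 'I_N -> F.
Hypothesis xinj : injective x.

Definition lag (j : 'I_N) : {poly F} :=
  (\prod_(i | i != j) (x j - x i))^-1 *: \prod_(i | i != j) ('X - (x i)%:P).

Lemma lag_eval j k : (lag j).[x k] = (k == j)%:R.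
Proof.
rewrite /lag hornerZ horner_prod.
rewrite [X in _ * X](eq_bigr (fun i => x k - x i)); last by move=> i _; rewrite hornerXsubC.
have [->|kj] := eqVneq k j.
  rewrite mulVf //; apply/prodf_neq0 => i ij.
  by rewrite subr_eq0; apply: contra ij => /eqP /xinj ->.
by rewrite [X in _ * X](bigD1 k) //= subrr mul0r mulr0.
Qed.

Lemma size_lag j : (size (lag j) <= N)%N.
Proof.
apply: leq_trans (size_scale_leq _ _) _.
rewrite size_prod; last by move=> i _; rewrite -size_poly_eq0 size_XsubC.
under eq_bigr do rewrite size_XsubC.
rewrite sum_nat_const cardC1 card_ord.
case: N j => [[]//|n] _ /=.
change ((n * 2).+1 - n <= n.+1)%N; lia.
Qed.

Lemma size_sum_le (I : finType) (P : pred I) (G : I -> {poly F}) n :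
  (forall i, P i -> (size (G i) <= n)%N) -> (size (\sum_(i | P i) G i)%R <= n)%N.
Proof.
move=> H; apply: (big_ind (fun p : {poly F} => (size p <= n)%N)) => //.
  by rewrite size_poly0.
move=> p q hp hq; apply: leq_trans (size_polyD _ _) _; by rewrite geq_max hp hq.
Qed.

Lemma interp (p : {poly F}) : (size p <= N)%N -> p = \sum_(j < N) p.[x j] *: lag j.
Proof.
move=> sp; apply/eqP; rewrite -subr_eq0; apply/eqP.
apply: (@roots_geq_poly_eq0 _ _ [seq x i | i <- enum 'I_N]).
- apply/allP => y /mapP [k _ ->]; rewrite /root hornerD hornerN horner_sum.
  under eq_bigr do rewrite hornerZ lag_eval.
  rewrite (bigD1 k) //= eqxx mulr1 big1 ?addr0 ?subrr // => j /negbTE.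
  by rewrite eq_sym => ->; rewrite mulr0.
- by rewrite map_inj_uniq ?enum_uniq.
- rewrite size_map size_enum_ord.
  apply: leq_trans (size_polyD _ _) _; rewrite geq_max sp size_polyN.
  by apply: size_sum_le => i _; apply: leq_trans (size_scale_leq _ _) (size_lag _).
Qed.

Lemma lag_coef_Xn d m : (d < N)%N ->
  \sum_(j < N) x j ^+ d * (lag j)`_m = (m == d)%:R.
Proof.
move=> dN; have := interp ('X^d); rewrite size_polyXn => /(_ dN) E.
have := congr1 (fun p : {poly F} => p`_m) E; rewrite coefXn coef_sum => ->.
by apply: eq_bigr => j _; rewrite coefZ hornerXn.
Qed.

End Lagrange.

Set Implicit Arguments.
Unset Strict Implicit.
Section Ana.
Variable R : realType.

Lemma cvg_expn (u : nat -> R) (l : R) p :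
  u @ \oo --> l -> (fun n => u n ^+ p) @ \oo --> l ^+ p.
Proof.
move=> H; elim: p => [|p IH].
  rewrite expr0; under eq_cvg do rewrite expr0; exact: cvg_cst.
rewrite exprS; under eq_cvg do rewrite exprS; exact: cvgM.
Qed.

Lemma root_cvg0 (u : nat -> R) T : (0 < T)%N -> (forall n, 0 <= u n) ->
  (fun n => u n ^+ T) @ \oo --> 0 -> u @ \oo --> 0.
Proof.
move=> T0 u0 H; apply/cvgr0Pnorm_lt => e e0.
have Hn : \forall t \near \oo, `|u t ^+ T| < e ^+ T := cvgr0_norm_lt _ H _ (exprn_gt0 T e0).
move: (Hn eventually_filter); apply: filterS => n /=; rewrite !ger0_norm ?exprn_ge0 //.
by rewrite ltr_pXn2r // ?nnegrE ?(ltW e0).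
Qed.

Lemma cvg_sum_ord (K : nat) (G : 'I_K -> nat -> R) (l : 'I_K -> R) :
  (forall i, G i @ \oo --> l i) ->
  (fun n => \sum_(i < K) G i n) @ \oo --> \sum_(i < K) l i.
Proof.
move=> H; apply: cvg_big => //; first exact: add_continuous.
Qed.

Lemma prod_coef_cvg (M : nat) (p : 'I_M -> nat -> {poly R}) (q : 'I_M -> {poly R}) :
  (forall i d, (fun n => (p i n)`_d) @ \oo --> (q i)`_d) ->
  forall d, (fun n => (\prod_(i < M) p i n)`_d) @ \oo --> (\prod_(i < M) q i)`_d.
Proof.
elim: M p q => [|M IH] p q H d.
  rewrite big_ord0; under eq_cvg do rewrite big_ord0; exact: cvg_cst.
rewrite big_ord_recr coefM /=.
under eq_cvg do rewrite big_ord_recr coefM /=.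
apply: cvg_sum_ord => j; apply: cvgM; last exact: H.
exact: (IH (fun i => p (widen_ord (leqnSn M) i)) (fun i => q (widen_ord (leqnSn M) i))).
Qed.


Definition sc (T : nat) (z : R) : R := z `^ (T%:R)^-1.

Lemma sc_gt0 T z : 0 < z -> 0 < sc T z.
Proof. by move=> z0; rewrite /sc powR_gt0. Qed.

Lemma sc_exp T z : (0 < T)%N -> 0 <= z -> sc T z ^+ T = z.
Proof.
move=> T0 z0; have T0' : (T%:R : R) != 0 by rewrite pnatr_eq0 -lt0n.
by rewrite /sc -powR_mulrn ?powR_ge0 // -powRrM mulVf // powRr1.
Qed.

Lemma z1_cvg0 (z1 z2 : nat -> R) : (forall n, 0 < z2 n) ->
  (fun n => z1 n / z2 n) @ \oo --> 0 -> z2 @ \oo --> 0 -> z1 @ \oo --> 0.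
Proof.
move=> z2p H1 H2.
have -> : z1 = (fun n => z1 n / z2 n * z2 n).
  by apply/funext => n; rewrite divfK // gt_eqF.
by rewrite -(mulr0 0); apply: cvgM.
Qed.

Lemma sc_cvg0 T (z1 : nat -> R) : (0 < T)%N -> (forall n, 0 < z1 n) ->
  z1 @ \oo --> 0 -> (fun n => sc T (z1 n)) @ \oo --> 0.
Proof.
move=> T0 z1p H; apply: (@root_cvg0 _ T T0) => [n|]; first exact/ltW/sc_gt0.
have -> : (fun n => sc T (z1 n) ^+ T) = z1.
  by apply/funext => n; rewrite sc_exp // ltW.
exact: H.
Qed.

Lemma K3 T d (z1 z2 : nat -> R) : (0 < d)%N -> (d < T)%N ->
  (forall n, 0 < z1 n) -> (forall n, 0 < z2 n) -> z2 @ \oo --> 0 ->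
  (fun n => (z2 n) `^ (T%:R / (T.-1)%:R) / z1 n) @ \oo --> 0 ->
  (fun n => z2 n * (sc T (z1 n) ^+ d)^-1) @ \oo --> 0.
Proof.
move=> d0 dT z1p z2p H2 Hh.
have T0 : (0 < T)%N by apply: leq_trans dT.
apply: (@root_cvg0 _ T T0) => [n|].
  by rewrite mulr_ge0 ?invr_ge0 ?exprn_ge0 // ?ltW // ?sc_gt0.
have E : forall n, (z2 n * (sc T (z1 n) ^+ d)^-1) ^+ T = z2 n ^+ T / z1 n ^+ d.
  move=> n; rewrite exprMn exprVn -exprM mulnC exprM sc_exp // ltW //.
under eq_cvg do rewrite E.
set e := (T%:R / (T.-1)%:R : R).
have ed : e * d%:R <= T%:R.
  have T1 : (0 : R) < (T.-1)%:R by rewrite ltr0n; lia.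
  rewrite /e mulrAC ler_pdivrMr // -!natrM ler_nat leq_mul2l; apply/orP; right; lia.
apply: (@squeeze_cvgr _ _ _ _ (fun=> 0) (fun n => z2 n `^ e / z1 n)); last 2 first.
- exact: cvg_cst.
- exact: Hh.
have Hz2 := cvgr0_norm_lt _ H2 _ (@ltr01 R).
have Hhh := cvgr0_norm_lt _ Hh _ (@ltr01 R).
move: (Hz2 eventually_filter) (Hhh eventually_filter) => {Hz2 Hhh}.
move=> A B; apply: (filterS2 _ _ A B) => n /= ha hb.
have z2n := z2p n; have z1n := z1p n.
rewrite ger0_norm in ha; last exact: ltW.
rewrite ger0_norm in hb; last by rewrite divr_ge0 ?powR_ge0 // ltW.
have z2n' := ltW z2n; have z1n' := ltW z1n.
rewrite divr_ge0 ?exprn_ge0 //=.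
apply: (@le_trans _ _ ((z2 n `^ e / z1 n) ^+ d)).
  rewrite expr_div_n; apply: ler_wpM2r; first by rewrite invr_ge0 exprn_ge0.
  rewrite -(powR_mulrn _ (powR_ge0 _ _)) -powRrM -powR_mulrn //.
  by apply: ger_powR => //; rewrite z2n (ltW ha).
have h0 : 0 <= z2 n `^ e / z1 n by rewrite divr_ge0 ?powR_ge0.
rewrite -(prednK d0) exprS; apply: ler_piMr => //.
by rewrite exprn_ile1 // ltW.
Qed.

End Ana.

Unset Implicit Arguments.
Set Strict Implicit.

Section Main.
Variable R : realType.

Definition pp (T : nat) (z1 z2 a r : R) (s : 'I_T.-1 -> R) : {poly R} :=
  (a + r)%:P + z2 *: (\sum_(t < T.-1) s t *: 'X^(t.+1)) + (z1 * r) *: 'X^T.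

Lemma enc_pp T z1 z2 a r s y : (0 < T)%N ->
  enc_poly R T z1 z2 a r s y = (pp T z1 z2 a r s).[y].
Proof.
move=> T0; rewrite /enc_poly /pp !hornerE horner_sum.
under [X in _ = _ + _ * X + _]eq_bigr do rewrite hornerZ hornerXn.
case: ifP => // T2.
have -> : y ^+ T = y by have -> : T = 1%N by lia.
rewrite big1 ?mulr0 ?addr0 // => i _.
by have := ltn_ord i; lia.
Qed.

Lemma coef_pp T z1 z2 a r s d :
  (pp T z1 z2 a r s)`_d = (d == 0)%:R * (a + r)
     + z2 * (\sum_(t < T.-1) s t * (d == t.+1)%:R) + z1 * r * (d == T)%:R.
Proof.
rewrite /pp !coefD coefC !coefZ coef_sum coefXn.
under eq_bigr do rewrite coefZ coefXn.
by case: eqP => _; rewrite ?mul1r ?mul0r.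
Qed.

Lemma Csum0 T (s : 'I_T.-1 -> R) d : (d == 0)%N || (T <= d)%N ->
  \sum_(t < T.-1) s t * (d == t.+1)%:R = 0.
Proof.
move=> hd; apply: big1 => t _.
have : d != t.+1 by apply/eqP => e; move: (ltn_ord t) hd; rewrite e; lia.
by move/negbTE => ->; rewrite mulr0.
Qed.

Lemma size_pp T z1 z2 a r s : (0 < T)%N -> (size (pp T z1 z2 a r s) <= T.+1)%N.
Proof.
move=> T0; apply/leq_sizeP => d hd; rewrite coef_pp Csum0; last by apply/orP; right; lia.
have -> : (d == 0)%N = false by lia.
have -> : (d == T)%N = false by lia.
by rewrite !mulr0 mul0r !addr0.
Qed.

Lemma size_prod_le T m (F : 'I_m -> {poly R}) :
  (forall i, (size (F i) <= T.+1)%N) -> (size (\prod_(i < m) F i)%R <= (m * T).+1)%N.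
Proof.
elim: m F => [|m IH] F H; first by rewrite big_ord0 size_poly1.
rewrite big_ord_recr /=; apply: leq_trans (size_polyMleq _ _) _.
have /= h2 := IH (fun i => F (widen_ord (leqnSn m) i)) (fun i => H _).
have h1 := H ord_max.
move: h1 h2; set a := size _; set b := size _ => h1 h2.
rewrite mulSn; lia.
Qed.

Lemma coef_comp_scale (p : {poly R}) c d : (p \Po (c *: 'X))`_d = p`_d * c ^+ d.
Proof.
rewrite coef_comp_poly.
under eq_bigr do rewrite exprZn coefZ coefXn.
have [hd|hd] := ltnP d (size p).
  rewrite (bigD1 (Ordinal hd)) //= eqxx mulr1 big1 ?addr0 // => i hi.
  case: eqP => [e|]; last by rewrite !mulr0.
  by exfalso; move/eqP: hi; apply; apply: val_inj.
rewrite nth_default // mul0r big1 // => i _.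
case: eqP => [e|]; last by rewrite !mulr0.
by move: (ltn_ord i); rewrite -e; lia.
Qed.


Definition Cs {T} (s : 'I_T.-1 -> R) d := \sum_(t < T.-1) s t * (d == t.+1)%:R.

Lemma coef_qq T z1 z2 a r s d : (0 < T)%N -> 0 < z1 ->
  (pp T z1 z2 a r s \Po ((sc T z1)^-1 *: 'X))`_d =
  (d == 0)%:R * (a + r) + z2 * (sc T z1 ^+ d)^-1 * Cs s d + r * (d == T)%:R.
Proof.
move=> T0 z10.
have s0 : sc T z1 != 0 by rewrite gt_eqF // sc_gt0.
have hs := sc_exp T0 (ltW z10).
rewrite coef_comp_scale coef_pp exprVn /Cs.
have [->|d0] := eqVneq d 0.
  have -> : (0 == T)%N = false by lia.
  by rewrite expr0 invr1 /=; ring.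
have [->|dT] := eqVneq d T.
  rewrite -{1}hs /=; field; by rewrite expf_neq0.
rewrite /=; ring.
Qed.

Definition hf (a r : R) T : {poly R} := (a + r)%:P * 1 + r%:P * 'X^T.

Lemma qq_cvg T (z1 z2 : nat -> R) a r s :
  (0 < T)%N -> (forall n, 0 < z1 n) -> (forall n, 0 < z2 n) ->
  (fun n => z1 n / z2 n) @ \oo --> 0 -> z2 @ \oo --> 0 ->
  ((2 <= T)%N ->
     (fun n => (z2 n) `^ (T%:R / (T.-1)%:R) / z1 n) @ \oo --> 0) ->
  forall d, (fun n => (pp T (z1 n) (z2 n) a r s \Po ((sc T (z1 n))^-1 *: 'X))`_d)
     @ \oo --> (hf a r T)`_d.
Proof.
move=> T0 z1p z2p H12 H2 HT d.
under eq_cvg do rewrite coef_qq //.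
have -> : (hf a r T)`_d = (d == 0)%:R * (a + r) + 0 + r * (d == T)%:R.
  rewrite /hf coefD !coefCM coef1 coefXn; ring.
apply: cvgD; last exact: cvg_cst.
apply: cvgD; first exact: cvg_cst.
have [hd|hd] := boolP ((0 < d)%N && (d < T)%N).
  rewrite -(mul0r (Cs s d)); apply: cvgM; last exact: cvg_cst.
  move/andP: hd => [d0 dT].
  apply: K3 => //; apply: HT; lia.
rewrite /Cs Csum0; last by move: hd; lia.
under eq_cvg do rewrite mulr0.
exact: cvg_cst.
Qed.



Lemma core (M T N : nat) (z1 z2 : nat -> R) (x : 'I_N -> R) (A Rv : 'I_M -> R)
  (S : 'I_M -> 'I_T.-1 -> R) (m : nat) :
  (0 < T)%N -> (forall n, 0 < z1 n) -> (forall n, 0 < z2 n) ->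
  (fun n => z1 n / z2 n) @ \oo --> 0 -> z2 @ \oo --> 0 ->
  ((2 <= T)%N ->
     (fun n => (z2 n) `^ (T%:R / (T.-1)%:R) / z1 n) @ \oo --> 0) ->
  injective x -> (N <= (M * T).+1)%N -> (m < N)%N ->
  (fun n => (\sum_(i < N) node_output R M T (z1 n) (z2 n) A Rv S (x i) * (lag R N x i)`_m)
     / sc T (z1 n) ^+ m) @ \oo --> (\prod_(i < M) hf (A i) (Rv i) T)`_m.
Proof.
move=> T0 z1p z2p H12 H2 HT xinj NK mN.
set s := fun n => sc T (z1 n).
set P := fun n => \prod_(i < M) pp T (z1 n) (z2 n) (A i) (Rv i) (S i).
set Q := fun n => \prod_(i < M) (pp T (z1 n) (z2 n) (A i) (Rv i) (S i) \Po ((s n)^-1 *: 'X)).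
set K := (M * T).+1.
have s0 : forall n, s n != 0 by move=> n; rewrite gt_eqF // sc_gt0.
have hP : forall n i, node_output R M T (z1 n) (z2 n) A Rv S (x i) = (P n).[x i].
  move=> n i; rewrite /node_output /P horner_prod; apply: eq_bigr => l _.
  exact: enc_pp.
have sP : forall n, (size (P n) <= K)%N.
  by move=> n; apply: size_prod_le => i; apply: size_pp.
have PQ : forall n d, (P n)`_d = (Q n)`_d * s n ^+ d.
  move=> n d; rewrite /Q -(rmorph_prod (comp_poly ((s n)^-1 *: 'X))) /=.
  by rewrite coef_comp_scale exprVn divfK // expf_neq0.
set cc := fun d => \sum_(i < N) x i ^+ d * (lag R N x i)`_m.
have Eq : forall n, (\sum_(i < N) node_output R M T (z1 n) (z2 n) A Rv S (x i) * (lag R N x i)`_m)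
     / s n ^+ m = \sum_(d < K) (Q n)`_d * (s n ^+ d / s n ^+ m) * cc d.
  move=> n.
  under eq_bigr do rewrite hP (horner_coef_wide _ (sP n)) mulr_suml.
  rewrite exchange_big mulr_suml; apply: eq_bigr => d _.
  rewrite /cc mulr_suml mulr_sumr; apply: eq_bigr => i _.
  rewrite PQ; ring.
under eq_cvg do rewrite Eq.
have mK : (m < K)%N by apply: leq_trans mN NK.
have -> : (\prod_(i < M) hf (A i) (Rv i) T)`_m =
    \sum_(d < K) (if (d == m :> nat) then (\prod_(i < M) hf (A i) (Rv i) T)`_m else 0).
  rewrite (bigD1 (Ordinal mK)) //= eqxx [X in _ = _ + X]big1 ?addr0 // => d hd.
  case: eqP => // e; exfalso; move/eqP: hd; apply; exact: val_inj.
apply: cvg_sum_ord => d.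
have Qc : (fun n => (Q n)`_d) @ \oo --> (\prod_(i < M) hf (A i) (Rv i) T)`_d.
  rewrite /Q /s; exact: (prod_coef_cvg (fun i d => qq_cvg T z1 z2 (A i) (Rv i) (S i) T0 z1p z2p H12 H2 HT d)).
have [dN|dN] := ltnP d N.
  rewrite /cc (@lag_coef_Xn R N x xinj d m dN).
  have [e|ne] := eqVneq (d : nat) m.
    rewrite e /=.
    under eq_cvg do rewrite divff ?expf_neq0 // mulr1 mulr1.
    by rewrite -e; exact: Qc.
  under eq_cvg do rewrite /= mulr0n mulr0.
  exact: cvg_cst.
have md : (m < d)%N by apply: leq_trans mN dN.
rewrite ifF; last by apply/negbTE; rewrite neq_ltn md orbT.
suff : (fun n => (Q n)`_d * (s n ^+ d / s n ^+ m) * cc d) @ \oo -->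
  (\prod_(i < M) hf (A i) (Rv i) T)`_d * 0 * cc d by rewrite mulr0 mul0r.
apply: cvgM; last exact: cvg_cst.
apply: cvgM; first exact: Qc.
under eq_cvg do rewrite -expfB //.
suff : (fun n => s n ^+ (d - m)) @ \oo --> (0 : R) ^+ (d - m).
  by rewrite expr0n subn_eq0 leqNgt md.
apply: cvg_expn; apply: sc_cvg0 => //.
exact: z1_cvg0 z2p H12 H2.
Qed.


Lemma Dk_eq (M : nat) (eta sigma2 : R) (A Rv : 'I_M -> R) (k : nat) : (k < M)%N ->
  Dk R M eta sigma2 A Rv k =
  \sum_(j < M) ((((alpha_c R eta sigma2)%:P + 'X) ^+ (M - j) * (- 'X) ^+ j)`_k) *
     Ecoef (fun i => A i + Rv i) Rv j.
Proof.
move=> kM.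
set al := alpha_c R eta sigma2.
set G := \prod_(i < M) ((al * (A i + Rv i))%:P * 1 + (A i)%:P * 'X^1).
have h1 : Dk R M eta sigma2 A Rv k = G`_(k * 1).
  rewrite /G homP coef_sumCX //; last by apply: ltnW.
  rewrite /Dk /Ecoef; apply: eq_bigr => S _; congr (_ * _).
  by apply: eq_bigr => i _; rewrite /Zc -/al; ring.
have h2 : G = \prod_(i < M) ((A i + Rv i)%:P * (al%:P + 'X) + (Rv i)%:P * (- 'X)).
  apply: eq_bigr => i _; rewrite expr1 polyCM polyCD; ring.
rewrite h1 h2 homP muln1 coef_sumCu big_ord_recr /=.
rewrite subnn expr0 mul1r exprNn mulrC coefMXn kM mul0r addr0.
by apply: eq_bigr => j _; rewrite mulrC.
Qed.

End Main.

Theorem proposition1 (R : realType) (M T N : nat) (eta sigma2 : R)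
  (zeta1 zeta2 : nat -> R) (x : 'I_N -> R) :
  (0 < M)%N -> (0 < T)%N -> 0 < eta -> 0 < sigma2 ->
  (forall n, 0 < zeta1 n) -> (forall n, 0 < zeta2 n) ->
  (fun n => zeta1 n / zeta2 n) @ \oo --> (0 : R) ->
  zeta2 @ \oo --> (0 : R) ->
  ((2 <= T)%N ->
     (fun n => (zeta2 n) `^ (T%:R / (T.-1)%:R) / zeta1 n) @ \oo --> (0 : R)) ->
  injective x ->
  N = ((M.-1) * T).+1 ->
  forall k : nat, (k < M)%N ->
  exists f : nat -> ('I_N -> R) -> R,
    forall (A Rv : 'I_M -> R) (S : 'I_M -> 'I_T.-1 -> R),
      (fun n => f n (fun j => @node_output R M T (zeta1 n) (zeta2 n) A Rv S (x j)))
        @ \oo --> @Dk R M eta sigma2 A Rv k.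
Proof.
move=> M0 T0 eta0 sig0 z1p z2p H12 H2 HT xinj HN k kM.
set w := fun j : nat =>
  ((((alpha_c R eta sigma2)%:P + 'X) ^+ (M - j) * (- 'X) ^+ j)`_k : R).
exists (fun n v => \sum_(j < M) w j *
  ((\sum_(i < N) v i * (lag R N x i)`_(j * T)) / sc T (zeta1 n) ^+ (j * T))).
move=> A Rv S.
rewrite Dk_eq //.
apply: cvg_sum_ord => j.
apply: cvgM; first exact: cvg_cst.
have jM : (j <= M.-1)%N by have := ltn_ord j; lia.
have jT : (j * T <= M.-1 * T)%N by rewrite leq_mul2r jM orbT.
have MT : (M.-1 * T <= M * T)%N by rewrite leq_mul2r leq_pred orbT.
have NK : (N <= (M * T).+1)%N by rewrite HN; lia.
have mN : (j * T < N)%N by rewrite HN; lia.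
have := @core R M T N zeta1 zeta2 x A Rv S (j * T) T0 z1p z2p H12 H2 HT xinj NK mN.
suff -> : (\prod_(i < M) hf R (A i) (Rv i) T)`_(j * T) = Ecoef (fun i => A i + Rv i) Rv j by [].
rewrite /hf homP coef_sumCX //.
exact: ltnW (ltn_ord j).
Qed.
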